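(* Let $L = L_p + \varepsilon L_d \in \mathbb{DH}[t]$ be a line polynomial and $h \in \mathbb{R}[t]$ nonzero. Suppose there is a motion polynomial $C = P + \varepsilon D \in \mathbb{DH}[t]$ satisfying $$P\mathbf{k}\overline{P} = hL_p,\qquad -P\mathbf{k}\overline{D} - D\mathbf{k}\overline{P} = hL_d,\qquad P\overline{D} + D\overline{P} = 0,$$ and suppose there is $f \in \mathbb{R}[t]$, either linear or quadratic and irreducible over $\mathbb{R}$, such that $f^2$ divides $h/\gcd(\operatorname{rgcd}(L_p), h)$. Then there exist an integer $m \ge 1$ and a motion polynomial satisfying the same three equations with $h$ replaced by $h/f^{2m}$.
   Context: $\mathbb{H}$ denotes the real quaternions with units $\mathbf{i},\mathbf{j},\mathbf{k}$ and conjugation $\overline{p_0 + p_1\mathbf{i} + p_2\mathbf{j} + p_3\mathbf{k}} = p_0 - p_1\mathbf{i} - p_2\mathbf{j} - p_3\mathbf{k}$; $\mathbb{DH} = \mathbb{H} + \varepsilon\mathbb{H}$ with $\varepsilon^2=0$, $\varepsilon$ central. $\mathbb{H}[t]$, $\mathbb{DH}[t]$ are polynomial rings in a real indeterminate $t$ commuting with the coefficients; conjugation acts coefficientwise. A motion polynomial is $C = P + \varepsilon D \in \mathbb{DH}[t]$ with $P \ne 0$ and $P\overline{D} + D\overline{P} = 0$. A line polynomial is $L = L_p + \varepsilon L_d \in \mathbb{DH}[t]$ with $L_p, L_d$ vectorial (zero scalar part), $L_p\overline{L_d} + L_d\overline{L_p} = 0$, and $L_p \neq 0$. For $A \in \mathbb{H}[t]$,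 $\operatorname{rgcd}(A)$ is the monic gcd in $\mathbb{R}[t]$ of its four real coefficient polynomials. The three equations are equivalent to $C_\varepsilon\mathbf{k}\overline{C_\varepsilon} = hL$ (with $C_\varepsilon = P - \varepsilon D$) together with the Study condition. *)

(* Defs.v *)
From HB Require Import structures.
From mathcomp Require Import all_boot all_order all_algebra.
From mathcomp Require Import reals.
Set Implicit Arguments. Unset Strict Implicit. Unset Printing Implicit Defensive.
Import Order.TTheory GRing.Theory Num.Theory.
Local Open Scope ring_scope.

(* H[t] (t real, commuting with coefficients) is identified with
   quat {poly R}: a quaternion polynomial is a quaternion whose four real
   coordinates are real polynomials. *)
Record quat (A : Type) := Quat { q0 : A; q1 : A; q2 : A; q3 : A }.

Section QuatOps.
Variable A : comRingType.
Definition qzero : quat A := Quat 0 0 0 0.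
Definition qk : quat A := Quat 0 0 0 1.
Definition qadd (p q : quat A) : quat A :=
  Quat (q0 p + q0 q) (q1 p + q1 q) (q2 p + q2 q) (q3 p + q3 q).
Definition qopp (p : quat A) : quat A :=
  Quat (- q0 p) (- q1 p) (- q2 p) (- q3 p).
Definition qmul (p q : quat A) : quat A :=
  Quat (q0 p * q0 q - q1 p * q1 q - q2 p * q2 q - q3 p * q3 q)
       (q0 p * q1 q + q1 p * q0 q + q2 p * q3 q - q3 p * q2 q)
       (q0 p * q2 q - q1 p * q3 q + q2 p * q0 q + q3 p * q1 q)
       (q0 p * q3 q + q1 p * q2 q - q2 p * q1 q + q3 p * q0 q).
Definition qconj (p : quat A) : quat A :=
  Quat (q0 p) (- q1 p) (- q2 p) (- q3 p).
Definition qscale (c : A) (p : quat A) : quat A :=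
  Quat (c * q0 p) (c * q1 p) (c * q2 p) (c * q3 p).
Definition qvectorial (p : quat A) : Prop := q0 p = 0.
End QuatOps.

Section PolyQuat.
Variable R : realType.
(* monic gcd in R[t] (0 if both are 0) *)
Definition mgcd (a b : {poly R}) : {poly R} :=
  let g := gcdp a b in (lead_coef g)^-1 *: g.
Definition rgcd (p : quat {poly R}) : {poly R} :=
  mgcd (mgcd (mgcd (q0 p) (q1 p)) (q2 p)) (q3 p).

Definition study_cond (P D : quat {poly R}) : Prop :=
  qadd (qmul P (qconj D)) (qmul D (qconj P)) = qzero _.

Definition motion_poly (P D : quat {poly R}) : Prop :=
  P <> qzero _ /\ study_cond P D.

Definition line_poly (Lp Ld : quat {poly R}) : Prop :=
  [/\ qvectorial Lp, qvectorial Ld,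
      qadd (qmul Lp (qconj Ld)) (qmul Ld (qconj Lp)) = qzero _
    & Lp <> qzero _].

Definition three_eqs (P D Lp Ld : quat {poly R}) (h : {poly R}) : Prop :=
  [/\ qmul (qmul P (qk _)) (qconj P) = qscale h Lp,
      qadd (qopp (qmul (qmul P (qk _)) (qconj D)))
           (qopp (qmul (qmul D (qk _)) (qconj P))) = qscale h Ld
    & study_cond P D].
End PolyQuat.

(* Main.v *)
Require Import Defs.
From HB Require Import structures.
From mathcomp Require Import all_boot all_order all_algebra.
From mathcomp Require Import reals.
From mathcomp Require Import complex.
From mathcomp Require Import ring zify.
Import Order.TTheory GRing.Theory Num.Theory.
Local Open Scope ring_scope.

Section QL.
Variable A : comNzRingType.
Local Notation Q := (quat A).

Ltac qunf := cbv beta iota delta [qmul qadd qconj qscale qopp qk qzero q0 q1 q2 q3].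
Ltac qring := qunf; congr (Quat _ _ _ _); ring.

Definition qub (u0 u3 : A) : Q := Quat u0 0 0 (- u3).

Lemma id_eq1 (X : Q) (w : A) :
  qscale (w * w) (qmul (qmul X (qk A)) (qconj X)) =
  qmul (qmul (qscale w X) (qk A)) (qconj (qscale w X)).
Proof. case: X => *; qring. Qed.

Lemma id_eq1u (X : Q) (u0 u3 : A) :
  qmul (qmul (qmul X (qub u0 u3)) (qk A)) (qconj (qmul X (qub u0 u3))) =
  qscale (u0 ^+ 2 + u3 ^+ 2) (qmul (qmul X (qk A)) (qconj X)).
Proof. case: X => *; rewrite /qub; qring. Qed.

Lemma id_st (X Y : Q) (w : A) :
  qscale (w * w) (qadd (qmul X (qconj Y)) (qmul Y (qconj X))) =
  qadd (qmul (qscale w X) (qconj (qscale w Y))) (qmul (qscale w Y) (qconj (qscale w X))).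
Proof. case: X => *; case: Y => *; qring. Qed.

Lemma id_stu (X Y : Q) (u0 u3 : A) :
  qadd (qmul (qmul X (qub u0 u3)) (qconj (qmul Y (qub u0 u3))))
       (qmul (qmul Y (qub u0 u3)) (qconj (qmul X (qub u0 u3)))) =
  qscale (u0 ^+ 2 + u3 ^+ 2) (qadd (qmul X (qconj Y)) (qmul Y (qconj X))).
Proof. case: X => *; case: Y => *; rewrite /qub; qring. Qed.

Lemma id_st_t (P2 D : Q) (c rho : A) :
  qadd (qmul (qscale c P2) (qconj (qadd D (qscale rho (qmul P2 (qk A))))))
       (qmul (qadd D (qscale rho (qmul P2 (qk A)))) (qconj (qscale c P2))) =
  qadd (qmul (qscale c P2) (qconj D)) (qmul D (qconj (qscale c P2))).
Proof. case: P2 => *; case: D => *; qring. Qed.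

Definition sec (X Y : Q) : Q :=
  qadd (qopp (qmul (qmul X (qk A)) (qconj Y))) (qopp (qmul (qmul Y (qk A)) (qconj X))).

Lemma id_se (X Y : Q) (w : A) :
  qscale (w * w) (sec X Y) = sec (qscale w X) (qscale w Y).
Proof. case: X => *; case: Y => *; rewrite /sec; qring. Qed.

Lemma id_seu (X Y : Q) (u0 u3 : A) :
  sec (qmul X (qub u0 u3)) (qmul Y (qub u0 u3)) =
  qscale (u0 ^+ 2 + u3 ^+ 2) (sec X Y).
Proof. case: X => *; case: Y => *; rewrite /sec /qub; qring. Qed.

Lemma id_se_t (P2 D : Q) (c rho : A) :
  sec (qscale c P2) (qadd D (qscale rho (qmul P2 (qk A)))) = sec (qscale c P2) D.
Proof. case: P2 => *; case: D => *; rewrite /sec; qring. Qed.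

Lemma qscaleA (a b : A) (X : Q) : qscale a (qscale b X) = qscale (a * b) X.
Proof. case: X => *; qring. Qed.

Lemma qscale0 (a : A) : qscale a (qzero A) = qzero A.
Proof. qunf; congr (Quat _ _ _ _); ring. Qed.

End QL.
Arguments qub {A}.
Arguments sec {A}.

Section QI.
Variable A : idomainType.
Lemma qscale_inj (a : A) (X Y : quat A) : a != 0 -> qscale a X = qscale a Y -> X = Y.
Proof.
move=> a0; case: X => x0 x1 x2 x3; case: Y => y0 y1 y2 y3; rewrite /qscale /=.
by case=> /(mulfI a0) -> /(mulfI a0) -> /(mulfI a0) -> /(mulfI a0) ->.
Qed.
End QI.
Arguments qscale_inj {A a X Y}.

Section VLsec.
Variable R : realType.
Local Notation P := {poly R}.
Local Notation Q := (quat {poly R}).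

Lemma VL (P2 D Lp Ld P' D' : Q) (c h h' u0 u3 rho : P) :
  u0 ^+ 2 + u3 ^+ 2 != 0 ->
  three_eqs (qscale c P2) D Lp Ld h ->
  qscale (u0 ^+ 2 + u3 ^+ 2) P' = qmul (qscale c P2) (qub u0 u3) ->
  qscale (u0 ^+ 2 + u3 ^+ 2) D' =
    qmul (qadd D (qscale rho (qmul P2 (qk _)))) (qub u0 u3) ->
  h = (u0 ^+ 2 + u3 ^+ 2) * h' ->
  three_eqs P' D' Lp Ld h'.
Proof.
set w := u0 ^+ 2 + u3 ^+ 2 => w0 [e1 e2 e3] HP HD Hh.
have ww : w * w != 0 by rewrite mulf_neq0.
split.
- apply: (qscale_inj ww); rewrite id_eq1 HP id_eq1u e1 !qscaleA Hh.
  by rewrite mulrA.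
- change (sec P' D' = qscale h' Ld).
  have e2' : sec (qscale c P2) D = qscale h Ld := e2.
  apply: (qscale_inj ww); rewrite id_se HP HD id_seu id_se_t e2' !qscaleA Hh.
  by rewrite mulrA.
- rewrite /study_cond; apply: (qscale_inj ww).
  rewrite id_st HP HD id_stu id_st_t.
  by move: e3; rewrite /study_cond => ->; rewrite !qscale0.
Qed.

End VLsec.

Section Val.
Variable R : realType.
Local Notation P := {poly R}.
Local Notation Q := (quat {poly R}).

Definition qdvd (g : P) (X : Q) : Prop :=
  [/\ g %| q0 X, g %| q1 X, g %| q2 X & g %| q3 X].

Lemma sum4_lt (a b c d a' b' c' d' : nat) : (a' <= a)%N -> (b' <= b)%N -> (c' <= c)%N -> (d' <= d)%N ->
  (a' < a \/ b' < b \/ c' < c \/ d' < d)%N -> (a' + b' + c' + d' < a + b + c + d)%N.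
Proof. lia. Qed.

Lemma size_divp_le (p g : P) : (1 < size g)%N -> leq (size (p %/ g)) (size p).
Proof.
move=> sg; have g0 : g != 0 by rewrite -size_poly_gt0 (ltn_trans _ sg).
by rewrite size_divp // leq_subr.
Qed.

Lemma size_divp_lt (p g : P) : (1 < size g)%N -> p != 0 -> leq (size (p %/ g)).+1 (size p).
Proof.
move=> sg p0; have g0 : g != 0 by rewrite -size_poly_gt0 (ltn_trans _ sg).
rewrite size_divp //; have : (0 < size p)%N by rewrite size_poly_gt0.
by move=> sp; rewrite ltn_subrL sp -subn1 subn_gt0 sg.
Qed.

Lemma poly_val (g p : P) : (1 < size g)%N -> p != 0 ->
  exists n q, p = g ^+ n * q /\ ~~ (g %| q).
Proof.
move=> sg; have [N] := ubnP (size p); elim: N p => // N IH p sz p0.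
case: (boolP (g %| p)) => gp; last by exists 0%N, p; rewrite expr0 mul1r.
have pq := divpK gp; set q := p %/ g in pq.
have q0 : q != 0 by apply: contraNneq p0 => q0; rewrite -pq q0 mul0r.
have g0 : g != 0 by rewrite -size_poly_gt0 (ltn_trans _ sg).
have szq : (size q < N)%N.
  move: sz; rewrite ltnS; exact: leq_trans (size_divp_lt _ _ sg p0).
have [n [q' [qe nd]]] := IH q szq q0.
exists n.+1, q'; split => //; rewrite -pq qe exprS; ring.
Qed.

Lemma quat_val (g : P) (X : Q) : (1 < size g)%N -> X <> qzero _ ->
  exists n X2, X = qscale (g ^+ n) X2 /\ ~ qdvd g X2.
Proof.
move=> sg; have [N] := ubnP (size (q0 X) + size (q1 X) + size (q2 X) + size (q3 X)).
elim: N X => // N IH [x0 x1 x2 x3] /= sz X0.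
case: (boolP [&& g %| x0, g %| x1, g %| x2 & g %| x3]) => [/and4P [d0 d1 d2 d3] | nd]; last first.
  exists 0%N, (Quat x0 x1 x2 x3); split; first by rewrite /qscale /= !expr0 !mul1r.
  by case=> /= d0 d1 d2 d3; apply: (negP nd); apply/and4P.
set X1 := Quat (x0 %/ g) (x1 %/ g) (x2 %/ g) (x3 %/ g).
have eX : Quat x0 x1 x2 x3 = qscale g X1.
  by rewrite /qscale /X1 /= ![g * _]mulrC !divpK.
have X10 : X1 <> qzero _.
  move=> e; apply: X0; rewrite eX e /qscale /qzero /=; by rewrite !mulr0.
have sz1 : (size (q0 X1) + size (q1 X1) + size (q2 X1) + size (q3 X1) < N)%N.
  rewrite -ltnS (leq_trans _ sz) // ltnS /X1 /=.
  apply: sum4_lt; try exact: size_divp_le.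
  have [e0|n0] := eqVneq x0 0; first have [e1|n1] := eqVneq x1 0;
  first have [e2|n2] := eqVneq x2 0; first have [e3|n3] := eqVneq x3 0.
  - by exfalso; apply: X0; rewrite e0 e1 e2 e3.
  - by right; right; right; exact: size_divp_lt.
  - by right; right; left; exact: size_divp_lt.
  - by right; left; exact: size_divp_lt.
  - by left; exact: size_divp_lt.
have [n [X2 [e2 n2]]] := IH X1 sz1 X10.
exists n.+1, X2; split => //; rewrite eX e2 qscaleA exprS //.
Qed.

End Val.
Arguments qdvd {R}.
Arguments poly_val {R g p}.
Arguments quat_val {R g X}.

Section Prime.
Variable R : realType.
Local Notation P := {poly R}.
Local Notation Q := (quat {poly R}).
Variable g : P.
Hypothesis sg : (1 < size g)%N.
Hypothesis gpr : forall a b : P, g %| a * b -> g %| a \/ g %| b.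

Lemma g_neq0 : g != 0.
Proof. by rewrite -size_poly_gt0 (ltn_trans _ sg). Qed.

Lemma pow_cop n (a b : P) : ~~ (g %| a) -> g ^+ n %| a * b -> g ^+ n %| b.
Proof.
move=> na; have g0 := g_neq0; elim: n b => [|n IH] b; first by move=> _; rewrite expr0; exact: dvd1p.
move=> d.
have gb : g %| b.
  have : g %| a * b by apply: dvdp_trans d; rewrite exprS dvdp_mulr.
  by case/gpr => //; rewrite (negbTE na).
rewrite -(divpK gb) exprSr dvdp_mul2r //; apply: IH.
by move: d; rewrite -{1}(divpK gb) mulrA exprSr dvdp_mul2r.
Qed.

Lemma VA (h : P) (Lp : Q) (j : nat) : h != 0 ->
  (forall n, qdvd (g ^+ n) Lp -> g ^+ n.+1 %| h) ->
  qdvd (g ^+ (j + j)) (qscale h Lp) -> g ^+ j.+1 %| h.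
Proof.
move=> h0 SH [d0 d1 d2 d3].
case: (boolP (g ^+ j.+1 %| h)) => // nd; exfalso.
have [H [h1 [eh nh1]]] := poly_val sg h0.
have gH0 : g ^+ H != 0 by rewrite expf_neq0 // g_neq0.
have HleJ : (H <= j)%N.
  rewrite leqNgt; apply/negP => lt; move/negP: nd; apply.
  by rewrite eh dvdp_mulr // dvdp_exp2l.
have step (x : P) : g ^+ (j + j) %| h * x -> g ^+ (j + j - H) %| x.
  rewrite eh -mulrA => d; apply: (@pow_cop (j + j - H) h1 x nh1).
  by move: d; rewrite -{1}(subnKC (_ : H <= j + j)%N) ?exprD ?dvdp_mul2l // ?(leq_trans HleJ) ?leq_addr.
have : g ^+ (j + j - H).+1 %| h by apply: SH; split; apply: step.
rewrite eh -(subnKC (_ : H <= (j + j - H).+1)%N); last first.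
  by rewrite ltnW // ltnS leq_subRL ?(leq_trans HleJ) ?leq_addr //; lia.
rewrite exprD dvdp_mul2l // => d.
move/negP: nh1; apply; apply: dvdp_trans d.
have -> : ((j + j - H).+1 - H = (j + j - H - H).+1)%N by lia.
by rewrite exprS dvdp_mulr.
Qed.

End Prime.

Section Cx.
Variable R : realType.
Local Notation P := {poly R}.
Local Notation Q := (quat {poly R}).
Local Notation C := (R[i]).
Local Notation QC := (quat C).

Lemma cadd (a b c d : R) : (a +i* b)%C + (c +i* d)%C = ((a + c) +i* (b + d))%C.
Proof. by []. Qed.
Lemma cmul (a b c d : R) : (a +i* b)%C * (c +i* d)%C = ((a * c - b * d) +i* (a * d + b * c))%C.
Proof. by []. Qed.
Lemma copp (a b : R) : - (a +i* b)%C = ((- a) +i* (- b))%C.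
Proof. by []. Qed.
Lemma czero : (0 : C) = (0 +i* 0)%C. Proof. by []. Qed.
Lemma cone : (1 : C) = (1 +i* 0)%C. Proof. by []. Qed.

Ltac qunf := cbv beta iota delta [qmul qadd qconj qscale qopp qk qzero q0 q1 q2 q3].
Ltac cnorm := rewrite ?czero ?cone; rewrite ?(cadd, cmul, copp).
Ltac csolve := cnorm; congr (_ +i* _)%C; ring.

Definition E1 (x : QC) := q0 x + 'i%C * q3 x.
Definition E2 (x : QC) := q2 x + 'i%C * q1 x.
Definition F1 (x : QC) := q0 x - 'i%C * q3 x.
Definition F2 (x : QC) := q2 x - 'i%C * q1 x.

Definition Tm (p d : QC) (l m : bool) :=
  (if l then E1 d else E2 d) * (if m then F1 p else F2 p) +
  (if l then E1 p else E2 p) * (if m then F1 d else F2 d).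

Ltac dq x := let a := fresh "a" in let b := fresh "b" in let c := fresh "c" in let e := fresh "e" in
  case: x => [[? ?] [? ?] [? ?] [? ?]].

Definition Sq (p d : QC) := qadd (qmul p (qconj d)) (qmul d (qconj p)).
Definition Mq (p d : QC) :=
  qadd (qmul (qmul p (qk _)) (qconj d)) (qmul (qmul d (qk _)) (qconj p)).
Definition Nq (p : QC) := qmul (qmul p (qk _)) (qconj p).

Lemma T11E (p d : QC) :
  Tm p d true true + Tm p d true true =
  E1 (Sq p d) - 'i%C * E1 (Mq p d).
Proof. dq p; dq d; rewrite /Tm /E1 /F1 /Sq /Mq; qunf; csolve. Qed.


Lemma T22E (p d : QC) :
  Tm p d false false + Tm p d false false = E1 (Sq p d) + 'i%C * E1 (Mq p d).
Proof. dq p; dq d; rewrite /Tm /E1 /E2 /F2 /Sq /Mq; qunf; csolve. Qed.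
Lemma T21E (p d : QC) :
  'i%C * Tm p d false true + 'i%C * Tm p d false true = E2 (Mq p d).
Proof. dq p; dq d; rewrite /Tm /E1 /E2 /F1 /Mq; qunf; csolve. Qed.
Lemma T12E (p d : QC) :
  - ('i%C * Tm p d true false) - 'i%C * Tm p d true false = F2 (Mq p d).
Proof. dq p; dq d; rewrite /Tm /E1 /F2 /Mq; qunf; csolve. Qed.
Lemma NE1 (p : QC) : E1 (Nq p) = 'i%C * (E1 p * F1 p - E2 p * F2 p).
Proof. dq p; rewrite /E1 /E2 /F1 /F2 /Nq; qunf; csolve. Qed.
Lemma NE2 (p : QC) : E2 (Nq p) = 'i%C * (F1 p * E2 p) + 'i%C * (F1 p * E2 p).
Proof. dq p; rewrite /E1 /E2 /F1 /F2 /Nq; qunf; csolve. Qed.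
Lemma NF2 (p : QC) : F2 (Nq p) = - ('i%C * (E1 p * F2 p)) - 'i%C * (E1 p * F2 p).
Proof. dq p; rewrite /E1 /E2 /F1 /F2 /Nq; qunf; csolve. Qed.
Lemma ElinE1 (p d : QC) c : E1 (qadd d (qscale c (qmul p (qk _)))) = E1 d + 'i%C * c * E1 p.
Proof. dq p; dq d; case: c => ? ?; rewrite /E1; qunf; csolve. Qed.
Lemma ElinE2 (p d : QC) c : E2 (qadd d (qscale c (qmul p (qk _)))) = E2 d + 'i%C * c * E2 p.
Proof. dq p; dq d; case: c => ? ?; rewrite /E2; qunf; csolve. Qed.
Lemma ElinF1 (p d : QC) c : F1 (qadd d (qscale c (qmul p (qk _)))) = F1 d - 'i%C * c * F1 p.
Proof. dq p; dq d; case: c => ? ?; rewrite /F1; qunf; csolve. Qed.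
Lemma ElinF2 (p d : QC) c : F2 (qadd d (qscale c (qmul p (qk _)))) = F2 d - 'i%C * c * F2 p.
Proof. dq p; dq d; case: c => ? ?; rewrite /F2; qunf; csolve. Qed.
Lemma EvanE (x : QC) (s : R) : qmul x (Quat (0 +i* s)%C 0 0 (s +i* 0)%C) =
  Quat ('i%C * (s +i* 0)%C * E1 x) ((s +i* 0)%C * E2 x) ('i%C * (s +i* 0)%C * E2 x) ((s +i* 0)%C * E1 x).
Proof. dq x; rewrite /E1 /E2; qunf; congr Quat; csolve. Qed.
Lemma EvanF (x : QC) (s : R) : qmul x (Quat (0 +i* s)%C 0 0 ((- s) +i* 0)%C) =
  Quat ('i%C * (s +i* 0)%C * F1 x) (- ((s +i* 0)%C * F2 x)) ('i%C * (s +i* 0)%C * F2 x) (- ((s +i* 0)%C * F1 x)).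
Proof. dq x; rewrite /F1 /F2; qunf; congr Quat; csolve. Qed.
Lemma EF1 (x : QC) : E1 x + F1 x = q0 x + q0 x.
Proof. dq x; rewrite /E1 /F1 /=; csolve. Qed.
Lemma EF1' (x : QC) : E1 x - F1 x = 'i%C * q3 x + 'i%C * q3 x.
Proof. dq x; rewrite /E1 /F1 /=; csolve. Qed.
Lemma EF2 (x : QC) : E2 x + F2 x = q2 x + q2 x.
Proof. dq x; rewrite /E2 /F2 /=; csolve. Qed.
Lemma EF2' (x : QC) : E2 x - F2 x = 'i%C * q1 x + 'i%C * q1 x.
Proof. dq x; rewrite /E2 /F2 /=; csolve. Qed.

End Cx.
Arguments E1 {R}.
Arguments E2 {R}.
Arguments F1 {R}.
Arguments F2 {R}.
Arguments Tm {R}.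
Arguments Sq {R}.
Arguments Mq {R}.
Arguments Nq {R}.


Section QL2.
Variable A : comNzRingType.
Ltac qunf := cbv beta iota delta [qmul qadd qconj qscale qopp qk qzero q0 q1 q2 q3].
Ltac qring := qunf; congr (Quat _ _ _ _); ring.
Lemma id_sc1 (X Y : quat A) (c : A) :
  qadd (qmul (qscale c X) (qconj Y)) (qmul Y (qconj (qscale c X))) =
  qscale c (qadd (qmul X (qconj Y)) (qmul Y (qconj X))).
Proof. case: X => *; case: Y => *; qring. Qed.
Lemma id_sc2 (X Y : quat A) (c : A) : sec (qscale c X) Y = qscale c (sec X Y).
Proof. case: X => *; case: Y => *; rewrite /sec; qring. Qed.
Lemma id_sc3 (X : quat A) (c : A) :
  qmul (qmul (qscale c X) (qk _)) (qconj (qscale c X)) =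
  qscale (c * c) (qmul (qmul X (qk _)) (qconj X)).
Proof. case: X => *; qring. Qed.
Lemma id_sc4 (X : quat A) (c : A) (u0 u3 : A) :
  qmul (qscale c X) (qub u0 u3) = qscale c (qmul X (qub u0 u3)).
Proof. case: X => *; rewrite /qub; qring. Qed.
Lemma id_sc5 (X : quat A) (u0 : A) : qmul X (qub u0 0) = qscale u0 X.
Proof. case: X => *; rewrite /qub; qring. Qed.
Lemma qscale1 (X : quat A) : qscale 1 X = X.
Proof. case: X => *; qring. Qed.
Lemma qscale0l (X : quat A) : qscale 0 X = qzero _.
Proof. case: X => *; qring. Qed.
Lemma qadd0r (X : quat A) : qadd X (qzero _) = X.
Proof. case: X => *; qring. Qed.
Lemma qopp_eq0 (X : quat A) : qopp X = qzero _ -> X = qzero _.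
Proof.
case: X => x0 x1 x2 x3; rewrite /qopp /qzero /= => -[].
by move=> /eqP; rewrite oppr_eq0 => /eqP -> /eqP; rewrite oppr_eq0 => /eqP ->
  /eqP; rewrite oppr_eq0 => /eqP -> /eqP; rewrite oppr_eq0 => /eqP ->.
Qed.
Lemma sec_Mq (X Y : quat A) :
  sec X Y = qopp (qadd (qmul (qmul X (qk _)) (qconj Y)) (qmul (qmul Y (qk _)) (qconj X))).
Proof. case: X => *; case: Y => *; rewrite /sec; qring. Qed.
End QL2.

Section Ev.
Variable R : realType.
Local Notation P := {poly R}.
Local Notation Q := (quat {poly R}).
Local Notation C := (R[i]).
Local Notation QC := (quat C).

Definition ev (z : C) (p : P) : C := (map_poly (real_complex R) p).[z].
Definition evq (z : C) (X : Q) : QC :=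
  Quat (ev z (q0 X)) (ev z (q1 X)) (ev z (q2 X)) (ev z (q3 X)).

Variable z : C.
Lemma evD p q : ev z (p + q) = ev z p + ev z q.
Proof. by rewrite /ev rmorphD hornerD. Qed.
Lemma evN p : ev z (- p) = - ev z p.
Proof. by rewrite /ev rmorphN hornerN. Qed.
Lemma evB p q : ev z (p - q) = ev z p - ev z q.
Proof. by rewrite evD evN. Qed.
Lemma evM p q : ev z (p * q) = ev z p * ev z q.
Proof. by rewrite /ev rmorphM hornerM. Qed.
Lemma evC c : ev z c%:P = (c%:C)%C.
Proof. by rewrite /ev map_polyC hornerC. Qed.
Lemma evX : ev z 'X = z.
Proof. by rewrite /ev map_polyX hornerX. Qed.
Lemma ev0 : ev z 0 = 0.
Proof. by rewrite -[0 : P]polyC0 evC. Qed.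
Lemma ev1 : ev z 1 = 1.
Proof. by rewrite -[1 : P]polyC1 evC. Qed.
Lemma evXn p n : ev z (p ^+ n) = ev z p ^+ n.
Proof. by elim: n => [|n IH]; rewrite ?expr0 ?ev1 // !exprS evM IH. Qed.

Ltac qunf := cbv beta iota delta [qmul qadd qconj qscale qopp qk qzero q0 q1 q2 q3].
Lemma evq_mul X Y : evq z (qmul X Y) = qmul (evq z X) (evq z Y).
Proof. case: X => *; case: Y => *; rewrite /evq; qunf; by rewrite !(evD, evN, evM). Qed.
Lemma evq_add X Y : evq z (qadd X Y) = qadd (evq z X) (evq z Y).
Proof. case: X => *; case: Y => *; rewrite /evq; qunf; by rewrite !evD. Qed.
Lemma evq_conj X : evq z (qconj X) = qconj (evq z X).
Proof. case: X => *; rewrite /evq; qunf; by rewrite !evN. Qed.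
Lemma evq_opp X : evq z (qopp X) = qopp (evq z X).
Proof. case: X => *; rewrite /evq; qunf; by rewrite !evN. Qed.
Lemma evq_scale c X : evq z (qscale c X) = qscale (ev z c) (evq z X).
Proof. case: X => *; rewrite /evq; qunf; by rewrite !evM. Qed.
Lemma evq_k : evq z (qk _) = qk _.
Proof. by rewrite /evq; qunf; rewrite ev0 ev1. Qed.
Lemma evq_zero : evq z (qzero _) = qzero _.
Proof. by rewrite /evq; qunf; rewrite ev0. Qed.
End Ev.
Arguments ev {R}.
Arguments evq {R}.
Section Ev2.
Variable R : realType.
Local Notation P := {poly R}.
Local Notation Q := (quat {poly R}).
Ltac qunf := cbv beta iota delta [qmul qadd qconj qscale qopp qk qzero q0 q1 q2 q3].
Lemma evq_sub (r s : R) X : evq (r +i* s)%C (qmul X (qub ('X - r%:P) (- s%:P))) =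
  qmul (evq (r +i* s)%C X) (Quat (0 +i* s)%C 0 0 (s +i* 0)%C).
Proof.
rewrite evq_mul; congr qmul; rewrite /evq /qub /= opprK evB evX !evC ?ev0.
by congr Quat => //; apply/eqP; rewrite eq_complex /= ?subrr ?oppr0 ?addr0 ?eqxx.
Qed.
Lemma evq_subF (r s : R) X : evq (r +i* s)%C (qmul X (qub ('X - r%:P) (s%:P))) =
  qmul (evq (r +i* s)%C X) (Quat (0 +i* s)%C 0 0 ((- s) +i* 0)%C).
Proof.
rewrite evq_mul; congr qmul; rewrite /evq /qub /= evB evX evN !evC ?ev0.
by congr Quat => //; apply/eqP; rewrite eq_complex /= ?subrr ?oppr0 ?addr0 ?eqxx.
Qed.
End Ev2.

Section Alg.
Variable R : realType.
Local Notation C := (R[i]).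
Local Notation QC := (quat C).

Lemma dbl0 (x : C) : x + x = 0 -> x = 0.
Proof.
rewrite -mulr2n -mulr_natr => /eqP; rewrite mulf_eq0 pnatr_eq0 orbF.
by move/eqP.
Qed.
Lemma ci_neq0 : ('i%C : C) != 0.
Proof. by rewrite eq_complex /= oner_eq0 andbF. Qed.
Lemma idbl0 (x : C) : 'i%C * x + 'i%C * x = 0 -> x = 0.
Proof. by move/dbl0/eqP; rewrite mulf_eq0 (negbTE ci_neq0) => /eqP. Qed.
Lemma nidbl0 (x : C) : - ('i%C * x) - 'i%C * x = 0 -> x = 0.
Proof. by rewrite -opprD => /eqP; rewrite oppr_eq0 => /eqP /idbl0. Qed.

Lemma E1z : E1 (qzero C) = 0. Proof. by rewrite /E1 /= mulr0 addr0. Qed.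
Lemma E2z : E2 (qzero C) = 0. Proof. by rewrite /E2 /= mulr0 addr0. Qed.
Lemma F1z : F1 (qzero C) = 0. Proof. by rewrite /F1 /= mulr0 subr0. Qed.
Lemma F2z : F2 (qzero C) = 0. Proof. by rewrite /F2 /= mulr0 subr0. Qed.

Lemma L1 (p : QC) : Nq p = qzero _ ->
  (E1 p = 0 /\ E2 p = 0) \/ (F1 p = 0 /\ F2 p = 0).
Proof.
move=> N0.
have h1 : E1 p * F1 p = E2 p * F2 p.
  have := @NE1 _ p; rewrite N0 E1z => /esym /eqP; rewrite mulf_eq0 (negbTE ci_neq0) /=.
  by rewrite subr_eq0 => /eqP.
have h2 : F1 p * E2 p = 0 by apply: idbl0; rewrite -NE2 N0 E2z.
have h3 : E1 p * F2 p = 0 by apply: nidbl0; rewrite -NF2 N0 F2z.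
have [e1|e1] := eqVneq (E1 p) 0.
  move: h1; rewrite e1 mul0r => /esym /eqP; rewrite mulf_eq0 => /orP[] /eqP e.
    by left.
  move/eqP: h2; rewrite mulf_eq0 => /orP[] /eqP e'; last by left.
  by right.
move/eqP: h3; rewrite mulf_eq0 (negbTE e1) /= => /eqP f2.
move: h1; rewrite f2 mulr0 => /eqP; rewrite mulf_eq0 (negbTE e1) /= => /eqP f1.
by right.
Qed.

Lemma L2 (p d : QC) : Sq p d = qzero _ -> Mq p d = qzero _ -> forall l m, Tm p d l m = 0.
Proof.
move=> S0 M0 [] [].
- by apply: dbl0; rewrite T11E S0 M0 E1z mulr0 subr0.
- by apply: nidbl0; rewrite T12E M0 F2z.
- by apply: idbl0; rewrite T21E M0 E2z.
- by apply: dbl0; rewrite T22E S0 M0 E1z mulr0 addr0.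
Qed.

Lemma propE (p d : QC) (c : C) (l : bool) :
  (forall m, Tm p d m l = 0) ->
  (if l then F1 p else F2 p) != 0 ->
  (if l then F1 d else F2 d) = c * (if l then F1 p else F2 p) ->
  E1 d + c * E1 p = 0 /\ E2 d + c * E2 p = 0.
Proof.
move=> T Fp Fd.
have key m : (if m then E1 d else E2 d) + c * (if m then E1 p else E2 p) = 0.
  have := T m; rewrite /Tm Fd => H.
  have : ((if m then E1 d else E2 d) + c * (if m then E1 p else E2 p)) *
    (if l then F1 p else F2 p) = 0 by rewrite -H; ring.
  by move/eqP; rewrite mulf_eq0 (negbTE Fp) orbF => /eqP.
by split; [apply: (key true) | apply: (key false)].
Qed.

Lemma propF (p d : QC) (c : C) (l : bool) :
  (forall m, Tm p d l m = 0) ->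
  (if l then E1 p else E2 p) != 0 ->
  (if l then E1 d else E2 d) = c * (if l then E1 p else E2 p) ->
  F1 d + c * F1 p = 0 /\ F2 d + c * F2 p = 0.
Proof.
move=> T Ep Ed.
have key m : (if m then F1 d else F2 d) + c * (if m then F1 p else F2 p) = 0.
  have := T m; rewrite /Tm Ed => H.
  have : (if l then E1 p else E2 p) *
    ((if m then F1 d else F2 d) + c * (if m then F1 p else F2 p)) = 0 by rewrite -H; ring.
  by move/eqP; rewrite mulf_eq0 (negbTE Ep) /= => /eqP.
by split; [apply: (key true) | apply: (key false)].
Qed.

Lemma EF0 (x : QC) : E1 x = 0 -> E2 x = 0 -> F1 x = 0 -> F2 x = 0 -> x = qzero _.
Proof.
move=> e1 e2 f1 f2.
have a0 : q0 x = 0 by apply: dbl0; rewrite -EF1 e1 f1 addr0.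
have a3 : q3 x = 0 by apply: idbl0; rewrite -EF1' e1 f1 subr0.
have a2 : q2 x = 0 by apply: dbl0; rewrite -EF2 e2 f2 addr0.
have a1 : q1 x = 0 by apply: idbl0; rewrite -EF2' e2 f2 subr0.
by case: x a0 a1 a2 a3 {e1 e2 f1 f2} => /= ? ? ? ? -> -> -> ->.
Qed.

End Alg.

Section Core.
Variable R : realType.
Local Notation P := {poly R}.
Local Notation Q := (quat {poly R}).
Local Notation C := (R[i]).
Local Notation QC := (quat C).
Variables (z : C) (g : P).
Hypothesis sg : (1 < size g)%N.
Hypothesis Hroot : forall p : P, (ev z p == 0) = (g %| p).

Lemma gprime (a b : P) : g %| a * b -> g %| a \/ g %| b.
Proof.
by rewrite -Hroot evM mulf_eq0 => /orP[]; rewrite Hroot; [left|right].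
Qed.

Lemma ev_g : ev z g = 0.
Proof. by apply/eqP; rewrite Hroot dvdpp. Qed.

Lemma qdvd_evq (X : Q) : qdvd g X <-> evq z X = qzero _.
Proof.
case: X => x0 x1 x2 x3; rewrite /qdvd /evq /qzero /=; split.
  by case; rewrite -!Hroot => /eqP-> /eqP-> /eqP-> /eqP->.
by case=> /eqP ? /eqP ? /eqP ? /eqP ?; split; rewrite -Hroot.
Qed.

Lemma qdvd_div (X : Q) : qdvd g X -> exists Y, X = qscale g Y.
Proof.
case: X => x0 x1 x2 x3 [/= d0 d1 d2 d3].
exists (Quat (x0 %/ g) (x1 %/ g) (x2 %/ g) (x3 %/ g)).
by rewrite /qscale /= ![g * (_ %/ g)]mulrC !divpK.
Qed.

Lemma evq_sec (X Y : Q) :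
  evq z (sec X Y) = qopp (Mq (evq z X) (evq z Y)).
Proof. by rewrite sec_Mq /Mq evq_opp evq_add !evq_mul !evq_conj evq_k. Qed.

Lemma core (PP D Lp Ld P2 : Q) (h : P) (j : nat) :
  three_eqs PP D Lp Ld h -> h != 0 ->
  (forall n, qdvd (g ^+ n) Lp -> g ^+ n.+1 %| h) ->
  PP = qscale (g ^+ j) P2 ->
  [/\ g ^+ j.+1 %| h, Sq (evq z P2) (evq z D) = qzero _
    & Mq (evq z P2) (evq z D) = qzero _].
Proof.
move=> [e1 e2 e3] h0 SH eP.
have g0 : g != 0 by rewrite -size_poly_gt0 (ltn_trans _ sg).
have gj0 : g ^+ j != 0 by rewrite expf_neq0.
have d1 : g ^+ j.+1 %| h.
  apply: (@VA _ g sg gprime h Lp j h0 SH).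
  by rewrite -e1 eP id_sc3 -exprD; split => /=; apply: dvdp_mulr; exact: dvdpp.
split => //.
- move: e3; rewrite /study_cond eP id_sc1 -(@qscale0 _ (g ^+ j)) => /(qscale_inj gj0) S0.
  by rewrite /Sq -!evq_conj -!evq_mul -evq_add S0 evq_zero.
- have e2' : sec PP D = qscale h Ld := e2.
  have eh : h = g ^+ j * (g * (h %/ g ^+ j.+1)) by rewrite -{1}(divpK d1) exprS; ring.
  move: e2'; rewrite eP id_sc2 eh -qscaleA.
  move/(qscale_inj gj0) => e.
  apply: qopp_eq0; rewrite -evq_sec e evq_scale evM ev_g mul0r qscale0l //.
Qed.

End Core.

Section QStep.
Variable R : realType.
Local Notation P := {poly R}.
Local Notation Q := (quat {poly R}).
Local Notation C := (R[i]).
Local Notation QC := (quat C).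
Variables (r s : R) (g : P).
Hypothesis s0 : s != 0.
Hypothesis gE : g = ('X - r%:P) ^+ 2 + (s%:P) ^+ 2.
Hypothesis sg : (1 < size g)%N.
Hypothesis Hroot : forall p : P, (ev (r +i* s)%C p == 0) = (g %| p).
Local Notation z := (r +i* s)%C.

Lemma ev_interp (w : C) : exists rho : P, ev z rho = w.
Proof.
case: w => a b.
exists ((b / s)%:P * 'X + (a - b / s * r)%:P).
rewrite evD evM !evC evX /= -!complexr0 !cmul !cadd.
congr (_ +i* _)%C; first by ring.
by field.
Qed.

Lemma ii_inv (c : C) : 'i%C * (- 'i%C * c) = c.
Proof. by rewrite mulrA mulrN -expr2 sqr_i opprK mul1r. Qed.

Lemma qzero_N : qmul (qmul (qzero {poly R}) (qk _)) (qconj (qzero _)) = qzero _.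
Proof. by rewrite /qmul /qzero /qconj /qk /= !(mul0r, mulr0, oppr0, subr0, addr0). Qed.

Lemma dvdE (X : Q) : evq z X = qzero _ -> exists Y, X = qscale g Y.
Proof. by move=> H; apply: (@qdvd_div _ g); apply/(@qdvd_evq _ _ _ Hroot). Qed.

Lemma QS (PP D Lp Ld : Q) (h : P) :
  three_eqs PP D Lp Ld h -> h != 0 -> Lp <> qzero _ ->
  (forall n, qdvd (g ^+ n) Lp -> g ^+ n.+1 %| h) ->
  exists P' D' h', h = g * h' /\ three_eqs P' D' Lp Ld h'.
Proof.
move=> e h0 Lp0 SH.
have g0 : g != 0 by rewrite -size_poly_gt0 (ltn_trans _ sg).
have PP0 : PP <> qzero _.
  move=> PPe; apply: Lp0; case: e => e1 _ _; move: e1.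
  rewrite PPe qzero_N => /esym H; apply: (qscale_inj h0); by rewrite H qscale0.
have [j [P2 [eP nP2]]] := quat_val sg PP0.
have [d1 S0 M0] := @core _ _ g sg Hroot _ _ _ _ _ _ _ e h0 SH eP.
set p := evq z P2 in S0 M0; set d := evq z D in S0 M0.
have T := @L2 _ _ _ S0 M0.
have gh : g %| h by apply: dvdp_trans d1; rewrite exprS dvdp_mulr.
have hE : h = g * (h %/ g) by rewrite mulrC divpK.
set u0 := 'X - r%:P.
have nz : ~ [/\ E1 p = 0, E2 p = 0, F1 p = 0 & F2 p = 0].
  case=> a b c d'; apply: nP2; apply/(@qdvd_evq _ _ _ Hroot); exact: EF0.
have e' := e; rewrite eP in e'.
have fin (u3 rho : P) (P' D' : Q) : u0 ^+ 2 + u3 ^+ 2 = g ->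
    qscale g P' = qmul PP (qub u0 u3) ->
    qscale g D' = qmul (qadd D (qscale rho (qmul P2 (qk _)))) (qub u0 u3) ->
    exists P' D' h', h = g * h' /\ three_eqs P' D' Lp Ld h'.
  move=> wE HP HD; exists P', D', (h %/ g); split => //.
  apply: (@VL _ P2 D Lp Ld P' D' (g ^+ j) h (h %/ g) u0 u3 rho _ e'); rewrite ?wE ?g0 -?eP //.
have evDt rho : evq z (qadd D (qscale rho (qmul P2 (qk _)))) =
    qadd d (qscale (ev z rho) (qmul p (qk _))).
  by rewrite evq_add evq_scale evq_mul evq_k.
have pick (x y : C) : ~ (x = 0 /\ y = 0) -> exists l : bool, (if l then x else y) != 0.
  move=> nxy; case: (eqVneq x 0) => hx; last by exists true.
  case: (eqVneq y 0) => hy; last by exists false.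
  by exfalso; apply: nxy.
case: (boolP ((E1 p == 0) && (E2 p == 0))) => [/andP[/eqP a1 /eqP a2] | nA].
  have [m Fm] : exists m : bool, (if m then F1 p else F2 p) != 0.
    by apply: pick => -[f1 f2]; apply: nz.
  have Ed (l : bool) : (if l then E1 d else E2 d) = 0.
    have := T l m; rewrite /Tm.
    have -> : (if l then E1 p else E2 p) = 0 by case: l.
    by rewrite mul0r addr0 => /eqP; rewrite mulf_eq0 (negbTE Fm) orbF => /eqP.
  have [Y eY] : exists Y, qmul P2 (qub ('X - r%:P) (- s%:P)) = qscale g Y.
    apply: dvdE; rewrite evq_sub EvanE.
    by rewrite -/p a1 a2 !mulr0.
  have [Y' eY'] : exists Y', qmul (qadd D (qscale 0 (qmul P2 (qk _))))
      (qub ('X - r%:P) (- s%:P)) = qscale g Y'.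
    apply: dvdE; rewrite evq_sub EvanE.
    rewrite evDt ElinE1 ElinE2 -/d (Ed true) (Ed false) ev0 !mulr0 !mul0r !addr0.
    by rewrite !mulr0.
  apply: (fin (- s%:P) 0 (qscale (g ^+ j) Y) Y').
  - by rewrite gE sqrrN.
  - by rewrite eP id_sc4 eY !qscaleA mulrC.
  - by rewrite eY'.
case: (boolP ((F1 p == 0) && (F2 p == 0))) => [/andP[/eqP b1 /eqP b2] | nB].
  have [l El] : exists l : bool, (if l then E1 p else E2 p) != 0.
    by apply: pick => -[f1 f2]; move/negP: nA; apply; rewrite f1 f2 eqxx.
  have Fd (m : bool) : (if m then F1 d else F2 d) = 0.
    have := T l m; rewrite /Tm.
    have -> : (if m then F1 p else F2 p) = 0 by case: m.
    by rewrite mulr0 add0r => /eqP; rewrite mulf_eq0 (negbTE El) /= => /eqP.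
  have [Y eY] : exists Y, qmul P2 (qub ('X - r%:P) (s%:P)) = qscale g Y.
    apply: dvdE; rewrite evq_subF EvanF.
    by rewrite -/p b1 b2 !mulr0 oppr0.
  have [Y' eY'] : exists Y', qmul (qadd D (qscale 0 (qmul P2 (qk _))))
      (qub ('X - r%:P) (s%:P)) = qscale g Y'.
    apply: dvdE; rewrite evq_subF EvanF.
    rewrite evDt ElinF1 ElinF2 -/d (Fd true) (Fd false) ev0 !mulr0 !mul0r !subr0.
    by rewrite !mulr0 oppr0.
  apply: (fin (s%:P) 0 (qscale (g ^+ j) Y) Y').
  - by rewrite gE.
  - by rewrite eP id_sc4 eY !qscaleA mulrC.
  - by rewrite eY'.
have [l El] : exists l : bool, (if l then E1 p else E2 p) != 0.
  by apply: pick => -[f1 f2]; move/negP: nA; apply; rewrite f1 f2 eqxx.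
have [m Fm] : exists m : bool, (if m then F1 p else F2 p) != 0.
  by apply: pick => -[f1 f2]; move/negP: nB; apply; rewrite f1 f2 eqxx.
have jpos : (0 < j)%N.
  case: j eP {d1 e'} => // eP; exfalso.
  have N0 : Nq p = qzero _.
    case: e => e1 _ _; move: e1; rewrite eP expr0 qscale1 => e1.
    rewrite /Nq /p -(@evq_k _ z) -evq_conj -!evq_mul e1 evq_scale.
    have : ev z h = 0 by apply/eqP; rewrite Hroot.
    by move=> ->; rewrite qscale0l.
  case: (@L1 _ p N0) => -[x y].
    by move/negP: nA; apply; rewrite x y eqxx.
  by move/negP: nB; apply; rewrite x y eqxx.
set c := (if m then F1 d else F2 d) / (if m then F1 p else F2 p).
have Fdc : (if m then F1 d else F2 d) = c * (if m then F1 p else F2 p) by rewrite /c divfK.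
have [Ed1 Ed2] := @propE _ p d c m (fun l' => T l' m) Fm Fdc.
have [rho erho] := ev_interp (- 'i%C * c).
have [Y' eY'] : exists Y', qmul (qadd D (qscale rho (qmul P2 (qk _))))
    (qub ('X - r%:P) (- s%:P)) = qscale g Y'.
  apply: dvdE; rewrite evq_sub EvanE.
  by rewrite evDt ElinE1 ElinE2 -/d erho !ii_inv Ed1 Ed2 !mulr0.
apply: (fin (- s%:P) rho (qscale (g ^+ j.-1) (qmul P2 (qub ('X - r%:P) (- s%:P)))) Y').
- by rewrite gE sqrrN.
- by rewrite eP id_sc4 !qscaleA -exprS prednK.
- by rewrite eY'.
Qed.

End QStep.

Section LStep.
Variable R : realType.
Local Notation P := {poly R}.
Local Notation Q := (quat {poly R}).
Local Notation C := (R[i]).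
Local Notation QC := (quat C).
Variable r : R.
Local Notation g := ('X - r%:P).
Local Notation z := ((r%:C)%C : C).

Ltac cnorm := rewrite ?czero ?cone; rewrite ?(cadd, cmul, copp).

Lemma ev_real (p : P) : ev z p = ((p.[r])%:C)%C.
Proof. by rewrite /ev horner_map. Qed.

Lemma HrootL (p : P) : (ev z p == 0) = (g %| p).
Proof.
rewrite ev_real dvdp_XsubCl /root; apply/eqP/eqP; last by move=> ->.
by case.
Qed.

Lemma sgL : (1 < size g)%N.
Proof. by rewrite size_XsubC. Qed.

Lemma evq_real (X : Q) : evq z X =
  Quat ((q0 X).[r])%:C%C ((q1 X).[r])%:C%C ((q2 X).[r])%:C%C ((q3 X).[r])%:C%C.
Proof. by rewrite /evq !ev_real. Qed.

Lemma E1r (x0 x1 x2 x3 : R) : E1 (Quat x0%:C%C x1%:C%C x2%:C%C x3%:C%C) = (x0 +i* x3)%C.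
Proof. rewrite /E1 /= -!complexr0; cnorm; congr (_ +i* _)%C; ring. Qed.
Lemma E2r (x0 x1 x2 x3 : R) : E2 (Quat x0%:C%C x1%:C%C x2%:C%C x3%:C%C) = (x2 +i* x1)%C.
Proof. rewrite /E2 /= -!complexr0; cnorm; congr (_ +i* _)%C; ring. Qed.
Lemma F1r (x0 x1 x2 x3 : R) : F1 (Quat x0%:C%C x1%:C%C x2%:C%C x3%:C%C) = (x0 +i* (- x3))%C.
Proof. rewrite /F1 /= -!complexr0; cnorm; congr (_ +i* _)%C; ring. Qed.
Lemma F2r (x0 x1 x2 x3 : R) : F2 (Quat x0%:C%C x1%:C%C x2%:C%C x3%:C%C) = (x2 +i* (- x1))%C.
Proof. rewrite /F2 /= -!complexr0; cnorm; congr (_ +i* _)%C; ring. Qed.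

Lemma real_rho (a b e f : R) : (a +i* b)%C != 0 ->
  (e +i* f)%C * (a +i* (- b))%C + (a +i* b)%C * (e +i* (- f))%C = 0 ->
  exists rho : R, (e +i* (- f))%C = 'i%C * (rho%:C)%C * (a +i* (- b))%C.
Proof.
move=> n0 /eqP; rewrite !cmul !cadd eq_complex /= => /andP[/eqP H _].
have ab : a ^+ 2 + b ^+ 2 != 0.
  apply: contraNneq n0 => /eqP; rewrite paddr_eq0 ?sqr_ge0 // !sqrf_eq0.
  by case/andP => /eqP -> /eqP ->.
have H' : e * a + f * b = 0.
  by apply: (@mulfI _ 2); rewrite ?pnatr_eq0 // mulr0 -H; ring.
exists ((e * b - f * a) / (a ^+ 2 + b ^+ 2)).
rewrite -!complexr0 !cmul; congr (_ +i* _)%C.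
- apply: (@etrans _ _ (((e * b - f * a) * b + a * (e * a + f * b)) / (a ^+ 2 + b ^+ 2))).
    by field.
  by rewrite H' mulr0 addr0; field.
- apply: (@etrans _ _ (((e * b - f * a) * a - b * (e * a + f * b)) / (a ^+ 2 + b ^+ 2))).
    by field.
  by rewrite H' mulr0 subr0; field.
Qed.

Lemma real_zero (x0 x1 x2 x3 : R) :
  E1 (Quat x0%:C%C x1%:C%C x2%:C%C x3%:C%C) = 0 ->
  E2 (Quat x0%:C%C x1%:C%C x2%:C%C x3%:C%C) = 0 ->
  Quat x0%:C%C x1%:C%C x2%:C%C x3%:C%C = qzero _.
Proof. by rewrite E1r E2r => -[-> ->] [-> ->]. Qed.

Lemma LS (PP D Lp Ld : Q) (h : P) :
  three_eqs PP D Lp Ld h -> h != 0 -> Lp <> qzero _ ->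
  (forall n, qdvd (g ^+ n) Lp -> g ^+ n.+2 %| h) ->
  exists P' D' h', h = g ^+ 2 * h' /\ three_eqs P' D' Lp Ld h'.
Proof.
move=> e h0 Lp0 SH2.
have sg := sgL.
have g0 : g != 0 by rewrite polyXsubC_eq0.
have SH n : qdvd (g ^+ n) Lp -> g ^+ n.+1 %| h.
  by move=> H; apply: dvdp_trans (SH2 n H); apply: dvdp_exp2l.
have PP0 : PP <> qzero _.
  move=> PPe; apply: Lp0; case: e => e1 _ _; move: e1.
  rewrite PPe (@qzero_N R) => /esym H; apply: (qscale_inj h0); by rewrite H qscale0.
have [j [P2 [eP nP2]]] := quat_val sg PP0.
have [d1 S0 M0] := @core _ z g sg HrootL _ _ _ _ _ _ _ e h0 SH eP.
set p := evq z P2 in S0 M0; set d := evq z D in S0 M0.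
have T := @L2 _ _ _ S0 M0.
have pE : p = _ := evq_real P2.
have dE : d = _ := evq_real D.
have e' := e; rewrite eP in e'.
have evDt rho : evq z (qadd D (qscale rho (qmul P2 (qk _)))) =
    qadd d (qscale (ev z rho) (qmul p (qk _))).
  by rewrite evq_add evq_scale evq_mul evq_k.
have [l [a [b [e1 [f [Hne [Ep [Fp [Ed Fd]]]]]]]]] : exists (l : bool) (a b e f : R),
    [/\ (a +i* b)%C != 0, (if l then E1 p else E2 p) = (a +i* b)%C,
        (if l then F1 p else F2 p) = (a +i* (- b))%C,
        (if l then E1 d else E2 d) = (e +i* f)%C
      & (if l then F1 d else F2 d) = (e +i* (- f))%C].
  case: (eqVneq ((q0 P2).[r] +i* (q3 P2).[r])%C 0) => h1.
    case: (eqVneq ((q2 P2).[r] +i* (q1 P2).[r])%C 0) => h2.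
      exfalso; apply: nP2; apply/(@qdvd_evq _ _ _ HrootL).
      by rewrite -/p pE; apply: real_zero; rewrite ?E1r ?E2r.
    exists false, (q2 P2).[r], (q1 P2).[r], (q2 D).[r], (q1 D).[r].
    by rewrite pE dE E2r F2r E2r F2r.
  exists true, (q0 P2).[r], (q3 P2).[r], (q0 D).[r], (q3 D).[r].
  by rewrite pE dE E1r F1r E1r F1r.
have Fne : (a +i* (- b))%C != 0.
  by move: Hne; rewrite !eq_complex /= oppr_eq0.
have [rho Hrho] : exists rho : R, (e1 +i* (- f))%C = 'i%C * (rho%:C)%C * (a +i* (- b))%C.
  apply: real_rho => //.
  by have := T l l; rewrite /Tm Ep Fp Ed Fd.
have jpos : (0 < j)%N.
  case: j eP {d1 e'} => // eP; exfalso.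
  have N0 : Nq p = qzero _.
    case: e => e2 _ _; move: e2; rewrite eP expr0 qscale1 => e2.
    rewrite /Nq /p -(@evq_k _ z) -evq_conj -!evq_mul e2 evq_scale.
    have : ev z h = 0.
      have q0L : qdvd (g ^+ 0) Lp by rewrite expr0; split; apply: dvd1p.
      by apply/eqP; rewrite HrootL; apply: dvdp_trans (SH2 0 q0L); rewrite exprS dvdp_mulr // dvdpp.
    by move=> ->; rewrite qscale0l.
  case: (@L1 _ p N0) => -[x y].
    by move: Hne; rewrite -Ep; case: l {Ep Fp Ed Fd}; rewrite ?x ?y eqxx.
  by move: Fne; rewrite -Fp; case: l {Ep Fp Ed Fd}; rewrite ?x ?y eqxx.
set c := 'i%C * (rho%:C)%C.
have Fdc : (if l then F1 d else F2 d) = c * (if l then F1 p else F2 p) by rewrite Fd Fp Hrho.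
have Fpne : (if l then F1 p else F2 p) != 0 by rewrite Fp.
have [Ed1 Ed2] := @propE _ p d c l (fun l' => T l' l) Fpne Fdc.
have [Y' eY'] : exists Y', qadd D (qscale rho%:P (qmul P2 (qk _))) = qscale g Y'.
  apply: (@qdvd_div _ g); apply/(@qdvd_evq _ _ _ HrootL).
  rewrite evq_real; apply: real_zero; rewrite -evq_real evDt ?ElinE1 ?ElinE2 evC.
    exact: Ed1.
  exact: Ed2.
have g2h : g ^+ 2 %| h by apply: dvdp_trans d1; apply: dvdp_exp2l.
exists (qscale (g ^+ j.-1) P2), Y', (h %/ g ^+ 2); split.
  by rewrite mulrC divpK.
apply: (@VL _ P2 D Lp Ld _ _ (g ^+ j) h (h %/ g ^+ 2) g 0 (rho%:P) _ e').
- by rewrite expr0n addr0 expf_neq0.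
- rewrite id_sc5 !qscaleA expr0n addr0 -exprD -exprS; congr qscale; congr (_ ^+ _).
  by rewrite addnC addn2 prednK.
- by rewrite id_sc5 eY' qscaleA expr0n addr0 expr2.
- by rewrite expr0n addr0 mulrC divpK.
Qed.

End LStep.

Section Fin.
Variable R : realType.
Local Notation P := {poly R}.
Local Notation Q := (quat {poly R}).
Local Notation C := (R[i]).

Lemma three_scale (PP D Lp Ld : Q) (h k : P) : three_eqs PP D Lp Ld h ->
  three_eqs (qscale k PP) (qscale k D) Lp Ld (k * k * h).
Proof.
case=> e1 e2 e3; split.
- by rewrite id_sc3 e1 qscaleA.
- change (sec (qscale k PP) (qscale k D) = qscale (k * k * h) Ld).
  have e2' : sec PP D = qscale h Ld := e2.
  by rewrite -id_se e2' qscaleA.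
- rewrite /study_cond -id_st; move: e3; rewrite /study_cond => ->.
  by rewrite qscale0.
Qed.

Lemma motion_of (PP D Lp Ld : Q) (h : P) : three_eqs PP D Lp Ld h -> h != 0 ->
  Lp <> qzero _ -> motion_poly PP D.
Proof.
move=> e h0 Lp0; split; last by case: e.
move=> PPe; apply: Lp0; case: e => e1 _ _; move: e1.
rewrite PPe (@qzero_N R) => /esym H; apply: (qscale_inj h0); by rewrite H qscale0.
Qed.

Lemma FIN (Lp Ld PP D : Q) (h h2 f g : P) (k : R) : k != 0 -> f = k *: g ->
  h = g ^+ 2 * h2 -> h != 0 -> Lp <> qzero _ -> three_eqs PP D Lp Ld h2 ->
  exists P' D', motion_poly P' D' /\ three_eqs P' D' Lp Ld (h %/ f ^+ 2).
Proof.
move=> k0 fE hE h0 Lp0 e.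
have g20 : g ^+ 2 != 0 by apply: contraNneq h0 => g2; rewrite hE g2 mul0r.
have h20 : h2 != 0 by apply: contraNneq h0 => h2e; rewrite hE h2e mulr0.
have hq : h %/ f ^+ 2 = (k^-1)%:P * (k^-1)%:P * h2.
  rewrite fE exprZn divpZr ?expf_neq0 // hE mulKp //.
  by rewrite -polyCM mul_polyC -expr2 exprVn.
exists (qscale (k^-1)%:P PP), (qscale (k^-1)%:P D).
have e' := @three_scale _ _ _ _ _ (k^-1)%:P e; rewrite -hq in e'.
split => //; apply: (@motion_of _ _ _ _ _ e' _ Lp0).
by rewrite hq !mulf_neq0 // polyC_eq0 invr_eq0.
Qed.

Lemma mgcd_dvd (x a b : P) : x %| a -> x %| b -> x %| mgcd a b.
Proof.
rewrite /mgcd => xa xb.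
have xg : x %| gcdp a b by rewrite dvdp_gcd xa xb.
case: (eqVneq (lead_coef (gcdp a b))^-1 0) => k0.
  by rewrite k0 scale0r dvdp0.
by rewrite dvdpZr.
Qed.

Lemma mgcd_dvdr (a b : P) : b != 0 -> mgcd a b %| b.
Proof.
move=> b0; rewrite /mgcd dvdpZl ?dvdp_gcdr //.
by rewrite invr_eq0 lead_coef_eq0 gcdp_eq0 negb_and b0 orbT.
Qed.

Lemma rgcd_dvd (x : P) (Lp : Q) : qdvd x Lp -> x %| rgcd Lp.
Proof. by case=> *; rewrite /rgcd !mgcd_dvd. Qed.

Lemma SHgen (Lp : Q) (h g : P) : h != 0 -> g ^+ 2 %| h %/ mgcd (rgcd Lp) h ->
  forall n, qdvd (g ^+ n) Lp -> g ^+ n.+2 %| h.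
Proof.
move=> h0 gq; set G := mgcd (rgcd Lp) h.
have Gh : G %| h by apply: mgcd_dvdr.
have hE : h = (h %/ G) * G by rewrite divpK.
elim=> [|n IH] qd; first by rewrite hE dvdp_mulr.
have le n' : g ^+ n' %| g ^+ n'.+1 by apply: dvdp_exp2l.
have qd' : qdvd (g ^+ n) Lp.
  by case: qd => *; split; apply: dvdp_trans (le n) _.
have gh : g ^+ n.+1 %| h by apply: dvdp_trans (le _) (IH qd').
have gG : g ^+ n.+1 %| G by apply: mgcd_dvd => //; exact: rgcd_dvd.
have -> : g ^+ n.+1.+2 = g ^+ 2 * g ^+ n.+1 by rewrite -exprD addnC addn2.
by rewrite hE dvdp_mul.
Qed.

Lemma eqp_scale (f g : P) : f %= g -> exists k : R, k != 0 /\ f = k *: g.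
Proof.
case/eqpP => -[c1 c2] /andP[c10 c20] /= E.
exists (c1^-1 * c2); split; first by rewrite mulf_neq0 ?invr_eq0.
by rewrite -scalerA -E scalerA mulVf // scale1r.
Qed.

End Fin.
Arguments FIN {R Lp Ld PP D h h2 f g k}.
Arguments eqp_scale {R f g}.
Arguments SHgen {R Lp h g}.
Arguments mgcd_dvdr {R a b}.


Theorem lemma8 (R : realType) (Lp Ld : quat {poly R}) (h f : {poly R})
  (P D : quat {poly R}) :
  line_poly Lp Ld ->
  h != 0 ->
  motion_poly P D ->
  three_eqs P D Lp Ld h ->
  (size f = 2%N \/ (size f = 3%N /\ irreducible_poly f)) ->
  f ^+ 2 %| h %/ mgcd (rgcd Lp) h ->
  exists m : nat, (1 <= m)%N /\ f ^+ (2 * m) %| h /\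
    exists P' D' : quat {poly R},
      motion_poly P' D' /\ three_eqs P' D' Lp Ld (h %/ f ^+ (2 * m)).
Proof.
move=> [_ _ _ Lp0] h0 _ e hf fq.
set G := mgcd (rgcd Lp) h in fq.
have Gh : G %| h by apply: mgcd_dvdr.
have fh : f ^+ 2 %| h.
  by apply: dvdp_trans fq _; rewrite -{2}(divpK Gh) dvdp_mulr.
exists 1%N; rewrite muln1; split => //; split => //.
have from_g (g : {poly R}) : f %= g -> (exists P' D' h2, h = g ^+ 2 * h2 /\ three_eqs P' D' Lp Ld h2) ->
    exists P' D', motion_poly P' D' /\ three_eqs P' D' Lp Ld (h %/ f ^+ 2).
  move=> fg [P' [D' [h2 [hE e2]]]].
  have [k [k0 fE]] := eqp_scale fg.
  exact: (FIN k0 fE hE h0 Lp0 e2).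
have g2q (g k : {poly R}) (k' : R) : k' != 0 -> f = k' *: g -> g ^+ 2 %| h %/ G.
  move=> k0 fE; apply: dvdp_trans fq; apply: dvdp_exp2r.
  by rewrite fE dvdpZr.
case: hf => [sf | [sf irr]].
-
  set a := f`_1; set b := f`_0.
  have a0 : a != 0.
    have : lead_coef f != 0 by rewrite lead_coef_eq0 -size_poly_gt0 sf.
    by rewrite lead_coefE sf.
  set r := - b / a.
  have rf : root f r.
    rewrite /root horner_coef sf !big_ord_recr big_ord0 /= add0r expr0 expr1 mulr1.
    by apply/eqP; rewrite -/a -/b /r; field.
  have gf : ('X - r%:P) %| f by rewrite dvdp_XsubCl.
  have fg : f %= ('X - r%:P) by rewrite eqp_sym -dvdp_size_eqp // size_XsubC sf.
  have [k [k0 fE]] := eqp_scale fg.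
  apply: (from_g _ fg).
  have SH2 := SHgen h0 (g2q _ 0 _ k0 fE).
  exact: (@LS R r P D Lp Ld h e h0 Lp0 SH2).
-
  have [z rz] : exists z, root (map_poly (real_complex R) f) z.
    by apply/closed_rootP; rewrite size_map_poly sf.
  case: z rz => r s rz.
  set g := ('X - r%:P) ^+ 2 + (s%:P) ^+ 2.
  have ev_def p : ev (r +i* s)%C p = (map_poly (real_complex R) p).[(r +i* s)%C] by [].
  have evg : ev (r +i* s)%C g = 0.
    rewrite /g evD !evXn evB evX !evC -!complexr0 !expr2.
    rewrite ?czero ?cone ?(cadd, cmul, copp).
    by congr (_ +i* _)%C; ring.
  have fdiv p : ev (r +i* s)%C p = 0 -> f %| p.
    move=> ep; apply/negPn/negP => nfp.
    have cop : coprimep f p by rewrite (irreducible_poly_coprime _ irr).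
    have cop' : coprimep (map_poly (real_complex R) f) (map_poly (real_complex R) p).
      by rewrite coprimep_map.
    by have := coprimep_root cop' rz; rewrite -ev_def ep eqxx.
  have sg3 : size g = 3%N.
    rewrite /g size_polyDl size_exp_XsubC //.
    by rewrite expr2 -polyCM; apply: leq_ltn_trans (size_polyC_leq1 _) _.
  have feg : f %= g by rewrite -dvdp_size_eqp ?fdiv // sg3 sf.
  have Hroot p : (ev (r +i* s)%C p == 0) = (g %| p).
    apply/eqP/idP => [ep|gp]; first by rewrite -(eqp_dvdl p feg); apply: fdiv.
    by rewrite -(divpK gp) evM evg mulr0.
  have s0 : s != 0.
    apply/negP => /eqP s0'; move: rz; rewrite s0' complexr0 /root horner_map.
    rewrite -[0 : R[i]]/((0 : R)%:C)%C (inj_eq (@complexI R)) -/(root f r) -dvdp_XsubCl => gf.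
    have := irr.2 _ _ gf; rewrite size_XsubC => /(_ isT) /eqp_size.
    by rewrite size_XsubC sf.
  have sg : (1 < size g)%N by rewrite sg3.
  have [k [k0 fE]] := eqp_scale feg.
  have SH2 := SHgen h0 (g2q _ 0 _ k0 fE).
  have SH1 n : qdvd (g ^+ n) Lp -> g ^+ n.+1 %| h.
    by move=> H; apply: dvdp_trans (SH2 n H); apply: dvdp_exp2l.
  have [P1 [D1 [h1 [hE1 e1]]]] :=
    @QS R r s g s0 (erefl _) sg Hroot P D Lp Ld h e h0 Lp0 SH1.
  have g0 : g != 0 by rewrite -size_poly_gt0 sg3.
  have h10 : h1 != 0 by apply: contraNneq h0 => h1e; rewrite hE1 h1e mulr0.
  have SH1' n : qdvd (g ^+ n) Lp -> g ^+ n.+1 %| h1.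
    by move=> H; have := SH2 n H; rewrite hE1 exprS dvdp_mul2l.
  have [P2 [D2 [h2 [hE2 e2]]]] :=
    @QS R r s g s0 (erefl _) sg Hroot P1 D1 Lp Ld h1 e1 h10 Lp0 SH1'.
  apply: (from_g _ feg).
  exists P2, D2, h2; split => //.
  by rewrite hE1 hE2 expr2 mulrA.
Qed.
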